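(* Let $X$ be a simplicial complex and let $\gamma$ be an $i$-non-skipping simple cycle in $X$. Then any test for list agreement of $1$-dimensional $2$-assignments on $X$ must perform at least $|\gamma|/i$ queries.
   Context: A $1$-dimensional $2$-assignment on $X$ gives each edge $e\in X(1)$ two functions $L^e_1,L^e_2:e\to\{0,1\}$; it is agreeing if there are $g_1,g_2:X(0)\to\{0,1\}$ and for each edge a permutation $\pi_e$ of $\{1,2\}$ with $L^e_{\pi_e(i)}=g_i|_e$. A query is an edge and returns both local functions on it. A test for list agreement is a randomized, possibly adaptive algorithm that accepts every agreeing $2$-assignment with probability $1$ and rejects every non-agreeing one with positive probability (no locally-differing assumption is made). A simple cycle $\gamma=(\gamma_0,\dots,\gamma_{n-1})$ in the graph $(X(0),X(1))$ has length $|\gamma|=n$ (indices mod $n$); $\mathrm{dist}_\gamma$ is the distance along the cycle. An edge $e=\{\gamma_a,\gamma_b\}\in X(1)$ skips the cycle edge $\{\gamma_c,\gamma_{c+1}\}$ if $\mathrm{dist}_\gamma(\gamma_a,\gamma_b)=\mathrm{dist}_\gamma(\gamma_a,\gamma_c)+\mathrm{dist}_\gamma(\gamma_{c+1},\gamma_b)+1$ (i.e. the cycle edge lies on a shortest arc of $\gamma$ between the endpoints of $e$). $\gamma$ is $i$-non-skipping if every edge of $X$ with both endpoints on $\gamma$ skips at most $i$ cycle edges. *)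

(* Defs.v *)
From mathcomp Require Import all_boot all_order all_fingroup all_algebra.
Set Implicit Arguments. Unset Strict Implicit. Unset Printing Implicit Defensive.
Import Order.TTheory GRing.Theory Num.Theory.

(* list membership (Prop-valued, no eqType needed) *)
Fixpoint InSeq {T : Type} (x : T) (s : seq T) : Prop :=
  match s with nil => False | y :: s' => y = x \/ InSeq x s' end.

Section Defs.
Variable V : finType.

Definition is_complex (X : {set {set V}}) : Prop :=
  forall s t : {set V}, s \in X -> t \subset s -> t \in X.

Definition edges (X : {set {set V}}) : {set {set V}} :=
  [set e in X | #|e| == 2].

(* A 1-dimensional 2-assignment: each edge e gets two local functions
   L e false = L^e_1 and L e true = L^e_2 (only their values on e matter). *)
Definition assignment := {set V} -> bool -> V -> bool.

Definition agreeing (X : {set {set V}}) (L : assignment) : Prop :=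
  exists g : bool -> V -> bool,
    forall e, e \in edges X ->
      exists pi : {perm bool}, forall j : bool, {in e, L e (pi j) =1 g j}.

(* Answer to a query on edge e: the two local functions restricted to e
   (normalized to false outside e so nothing else is revealed). *)
Definition answer (L : assignment) (e : {set V}) (j : bool) : V -> bool :=
  fun x => (x \in e) && L e j x.

(* Deterministic adaptive query algorithm (decision tree); leaves are
   accept (true) / reject (false). *)
Inductive dtree : Type :=
| DLeaf of bool
| DQuery of {set V} & ((V -> bool) -> (V -> bool) -> dtree).

Fixpoint run (L : assignment) (t : dtree) : bool :=
  match t with
  | DLeaf b => b
  | DQuery e k => run L (k (answer L e false) (answer L e true))
  end.

Inductive tree_ok (X : {set {set V}}) : nat -> dtree -> Prop :=
| ok_leaf q b : tree_ok X q (DLeaf b)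
| ok_query q e k : e \in edges X ->
    (forall f1 f2, tree_ok X q (k f1 f2)) -> tree_ok X q.+1 (DQuery e k).

(* A randomized adaptive algorithm making at most q queries: a (finitely
   supported) probability distribution over deterministic q-query trees. *)
Definition acc_prob (D : seq (rat * dtree)) (L : assignment) : rat :=
  (\sum_(p <- D) p.1 * (run L p.2)%:R)%R.

Definition is_list_agreement_test (X : {set {set V}})
    (D : seq (rat * dtree)) (q : nat) : Prop :=
  [/\ forall p, InSeq p D -> (0 < p.1)%R,
      (\sum_(p <- D) p.1)%R = 1%R,
      forall p, InSeq p D -> tree_ok X q p.2,
      forall L, agreeing X L -> acc_prob D L = 1%R
    & forall L, ~ agreeing X L -> (acc_prob D L < 1)%R].

Definition simple_cycle (X : {set {set V}}) n (gamma : 'I_n -> V) : Prop :=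
  [/\ 3 <= n, injective gamma &
      forall k : 'I_n, [set gamma k; gamma (ordS k)] \in edges X].

Definition cdist n (a b : 'I_n) : nat :=
  let d := if a <= b then b - a else a - b in minn d (n - d).

Definition skips n (gamma : 'I_n -> V) (e : {set V}) (c : 'I_n) : bool :=
  [exists a : 'I_n, exists b : 'I_n, (e == [set gamma a; gamma b]) &&
    (cdist a b == cdist a c + cdist (ordS c) b + 1)].

Definition non_skipping (X : {set {set V}}) n (gamma : 'I_n -> V) (i : nat)
  : Prop :=
  forall e, e \in edges X -> {subset e <= codom gamma} ->
    #|[set c : 'I_n | skips gamma e c]| <= i.

End Defs.
Arguments DLeaf {V}.

(* Main.v *)
Require Import Defs.
From mathcomp Require Import all_boot all_order all_fingroup all_algebra.
From mathcomp Require Import zify.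
Set Implicit Arguments. Unset Strict Implicit. Unset Printing Implicit Defensive.
Import Order.TTheory GRing.Theory Num.Theory.

Definition cd n x y := let d := if x <= y then y - x else x - y in minn d (n - d).
Lemma cdC n x y : cd n x y = cd n y x.
Proof. rewrite /cd; case: (ltngtP x y) => h; rewrite ?(ltnW h) ?leqNgt ?h //= h. Qed.
Lemma cd_sm n x y : x <= y -> 2*(y-x) <= n -> cd n x y = y - x.
Proof. move=> h1 h2; rewrite /cd h1 /=; apply/minn_idPl; lia. Qed.
Lemma cd_bg n x y : x <= y -> y - x <= n -> n <= 2*(y-x) -> cd n x y = n - (y - x).
Proof. move=> h1 h2 h3; rewrite /cd h1 /=; apply/minn_idPr; lia. Qed.

Arguments cd_sm n {x y}.
Arguments cd_bg n {x y}.
Lemma arith_lt n a b c : 3 <= n -> a < b -> b < n -> c < n ->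
  let s := if c.+1 < n then c.+1 else 0 in
  cd n a b != cd n a c + cd n s b + 1 ->
  cd n b a != cd n b c + cd n s a + 1 ->
  (n < 2*(b-a)) = ((a <= c) && (c < b)).
Proof.
move=> h3 hab hb hc s H1 H2.
have [hac|hac] := leqP a c.
  have [hcb|hcb] := ltnP c b.
    have hs : s = c.+1 by rewrite /s ifT //; lia.
    rewrite /= ltnNge; apply/negP => hn.
    move: H1; rewrite hs (cd_sm n hac) ?(cd_sm n (ltnW hab)) ?(cd_sm n hcb); try lia; rewrite ?eqxx.
  rewrite /=; apply/negbTE/negP => hn.
  move: H2; rewrite (cdC n b a) (cd_bg n (ltnW hab)); try lia.
  rewrite (cd_sm n hcb); try lia.
  rewrite /s; case: ifP => hs.
    rewrite (cdC n c.+1 a) (cd_bg n (_ : a <= c.+1)); try lia; rewrite ?eqxx.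
  rewrite (cd_sm n (leq0n a)); try lia; rewrite ?eqxx.
rewrite /=; apply/negbTE/negP => hn.
have hs : s = c.+1 by rewrite /s ifT //; lia.
move: H2; rewrite hs (cdC n b a) (cd_bg n (ltnW hab)); try lia.
rewrite (cdC n b c) (cd_bg n (_ : c <= b)); try lia.
rewrite (cd_sm n (_ : c.+1 <= a)); try lia; rewrite ?eqxx.
Qed.

Lemma arith n a b c : 3 <= n -> a < n -> b < n -> c < n -> a != b ->
  let s := if c.+1 < n then c.+1 else 0 in
  cd n a b != cd n a c + cd n s b + 1 ->
  cd n b a != cd n b c + cd n s a + 1 ->
  ((n < 2*(a-b)) == (n < 2*(b-a))) == ((a <= c) == (b <= c)).
Proof.
move=> h3 ha hb hc hab s H1 H2.
case: (ltngtP a b) => hlt; last by rewrite hlt eqxx in hab.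
  rewrite (arith_lt h3 hlt hb hc H1 H2) (_ : a - b = 0); last lia.
  rewrite muln0 ltn0.
  by case: (leqP a c) => h1; case: (leqP b c) => h2; case: (ltnP c b) => h4 //=; lia.
rewrite (arith_lt h3 hlt ha hc H2 H1) (_ : b - a = 0); last lia.
rewrite muln0 ltn0.
by case: (leqP a c) => h1; case: (leqP b c) => h2; case: (ltnP c a) => h4 //=; lia.
Qed.

Lemma ordS_val n (k : 'I_n) : val (ordS k) = if k.+1 < n then k.+1 else 0.
Proof.
rewrite /ordS /=; case: ifP => h; first by rewrite modn_small.
have -> : k.+1 = n by apply/eqP; rewrite eqn_leq ltn_ord leqNgt h.
by rewrite modnn.
Qed.

Section Constr.
Variables (V : finType) (n : nat) (gamma : 'I_n -> V).
Hypothesis Hinj : injective gamma.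

Definition oncyc (v : V) := [exists k : 'I_n, v == gamma k].
Definition fe (e : {set V}) (v : V) :=
  [exists a : 'I_n, exists b : 'I_n, [&& v == gamma b, gamma a \in e & n < 2 * (b - a)]].
Definition Lf : assignment V := fun e j v => oncyc v && addb (fe e v) j.
Definition hc (c : 'I_n) (v : V) := [exists k : 'I_n, (v == gamma k) && (k <= c)].
Definition gf c : bool -> V -> bool := fun j v => oncyc v && addb (hc c v) j.
Definition good c (e : {set V}) :=
  [forall v in e, forall w in e, (oncyc v && oncyc w) ==>
     ((fe e v == fe e w) == (hc c v == hc c w))].
Definition Lc c : assignment V := fun e => if good c e then Lf e else gf c.

Lemma oncyc_g k : oncyc (gamma k).
Proof. by apply/existsP; exists k. Qed.

Lemma hc_g c k : hc c (gamma k) = (k <= c).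
Proof.
apply/existsP/idP => [[k' /andP[/eqP /Hinj -> //]] | h].
by exists k; rewrite eqxx h.
Qed.

Lemma fe_g2 x y m : (m == x) || (m == y) ->
  fe [set gamma x; gamma y] (gamma m) = (n < 2 * (m - x)) || (n < 2 * (m - y)).
Proof.
move=> hm; apply/existsP/orP.
  move=> [a /existsP [b /and3P [/eqP /Hinj <- ha hlt]]].
  by move: ha; rewrite !inE => /orP [/eqP /Hinj <- | /eqP /Hinj <-]; [left|right].
case=> h.
  by exists x; apply/existsP; exists m; rewrite eqxx set21 h.
by exists y; apply/existsP; exists m; rewrite eqxx set22 h.
Qed.

Lemma Lc_agree X c : agreeing X (Lc c).
Proof.
exists (gf c) => e _; rewrite /Lc; case: ifP => hg; last first.
  by exists 1%g => j x _; rewrite perm1.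
set b := [exists v in e, oncyc v && (fe e v != hc c v)].
exists (if b then tperm false true else 1%g) => j x xe.
rewrite /Lf /gf; case: (boolP (oncyc x)) => ox //=.
have key : b = addb (fe e x) (hc c x).
  case hfx: (addb (fe e x) (hc c x)).
    apply/existsP; exists x; rewrite xe ox /=.
    by move: hfx; case: (fe e x); case: (hc c x).
  apply/negbTE/existsP => [[v /andP [ve /andP [ov hv]]]].
  move/forall_inP: hg => /(_ x xe) /forall_inP /(_ v ve); rewrite ox ov /=.
  by move: hfx hv; case: (fe e x); case: (fe e v); case: (hc c x); case: (hc c v).
have -> : (if b then tperm false true else 1%g) j = addb j b.
  by case: b {key}; case: j; rewrite ?perm1 ?tpermL ?tpermR.
by rewrite key; case: (fe e x); case: (hc c x); case: j.
Qed.

End Constr.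

Lemma Lf_nagree (V : finType) (X : {set {set V}}) n (gamma : 'I_n -> V) :
  simple_cycle X gamma -> ~ agreeing X (Lf gamma).
Proof.
case=> h3 Hinj Hedge [g H].
have step : forall k : 'I_n,
    addb (g false (gamma k)) (g false (gamma (ordS k))) = (k.+1 == n).
  move=> k; have [pi Hp] := H _ (Hedge k).
  rewrite -(Hp false (gamma k) (set21 _ _)) -(Hp false _ (set22 _ _)).
  rewrite /Lf !oncyc_g /= !fe_g2 ?eqxx ?orbT // ordS_val.
  have hk := ltn_ord k.
  case: ifP => h.
    have -> : (n < 2 * (k - k.+1)) = false by apply/negbTE; rewrite -leqNgt; lia.
    have -> : (n < 2 * (k.+1 - k)) = false by apply/negbTE; rewrite -leqNgt; lia.
    rewrite !subnn !muln0 !ltn0 /= (_ : (k.+1 == n) = false); last by apply/negbTE; lia.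
    by case: (pi false).
  have -> : (n < 2 * (k - 0)) = true by apply/idP; lia.
  rewrite ?subnn ?sub0n ?muln0 ?ltn0 /= (_ : (k.+1 == n) = true); last by apply/eqP; lia.
  by case: (pi false).
have n0 : 0 < n by lia.
have chain : forall m (hm : m < n), g false (gamma (Ordinal hm)) = g false (gamma (Ordinal n0)).
  elim=> [|m IH] hm; first by congr (g false (gamma _)); apply: val_inj.
  have hm' : m < n by lia.
  have := step (Ordinal hm'); rewrite /= (_ : (m.+1 == n) = false); last by apply/negbTE; lia.
  rewrite (_ : ordS (Ordinal hm') = Ordinal hm); last by apply: val_inj; rewrite ordS_val /= hm.
  by rewrite IH; case: (g false (gamma (Ordinal hm))); case: (g false (gamma (Ordinal n0))).
have hl : n.-1 < n by lia.
have := step (Ordinal hl); rewrite /= (_ : (n.-1.+1 == n) = true); last by apply/eqP; lia.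
rewrite (_ : ordS (Ordinal hl) = Ordinal n0); last by apply: val_inj; rewrite ordS_val /= ifF //; lia.
by rewrite chain addbb.
Qed.

Lemma good_ns (V : finType) (X : {set {set V}}) n (gamma : 'I_n -> V) c e :
  simple_cycle X gamma -> e \in edges X -> ~~ skips gamma e c -> good gamma c e.
Proof.
case=> h3 Hinj _ He Hns.
apply/forall_inP => v ve; apply/forall_inP => w we.
apply/implyP => /andP [/existsP [a /eqP va] /existsP [b /eqP vb]]; subst v w.
case: (a =P b) => [<-|nab]; first by rewrite !eqxx.
have Ee : e = [set gamma a; gamma b].
  apply/esym/eqP; rewrite eqEcard subUset !sub1set ve we /= cards2.
  move: He; rewrite inE => /andP [_ /eqP ->].
  by rewrite (inj_eq Hinj); move/eqP: nab => ->.
subst e.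
have H1 : cd n a b != cd n a c + cd n (ordS c) b + 1.
  apply/negP => E; move/negP: Hns; apply; apply/existsP; exists a; apply/existsP; exists b.
  by rewrite eqxx /=; exact: E.
have H2 : cd n b a != cd n b c + cd n (ordS c) a + 1.
  apply/negP => E; move/negP: Hns; apply; apply/existsP; exists b; apply/existsP; exists a.
  by rewrite setUC eqxx /=; exact: E.
rewrite !hc_g // !fe_g2 ?eqxx ?orbT // !subnn !muln0 !ltn0 /= orbF.
rewrite ordS_val in H1 H2.
by apply: arith => //; apply/eqP => E; apply: nab; apply: val_inj.
Qed.

Local Open Scope ring_scope.

Lemma acc_le (V : finType) (D : seq (rat * dtree V)) L :
  (forall p, InSeq p D -> 0 < p.1) -> acc_prob D L <= \sum_(p <- D) p.1.
Proof.
rewrite /acc_prob; elim: D => [|p D IH] hp; first by rewrite !big_nil.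
rewrite !big_cons; apply: lerD; last by apply: IH => p' h; apply: hp; right.
have h0 := hp p (or_introl erefl).
by case: (run L p.2); rewrite ?mulr1 ?mulr0 // ltW.
Qed.

Lemma acc_lt (V : finType) (D : seq (rat * dtree V)) L p :
  (forall p, InSeq p D -> 0 < p.1) -> InSeq p D -> run L p.2 = false ->
  acc_prob D L + p.1 <= \sum_(p <- D) p.1.
Proof.
rewrite /acc_prob; elim: D => [|p' D IH] hp //= hin hr.
rewrite !big_cons; case: hin => [->|hin].
  rewrite hr mulr0 add0r addrC lerD2l.
  by apply: acc_le => p'' h; apply: hp; right.
rewrite -addrA; apply: lerD.
  have h0 := hp p' (or_introl erefl).
  by case: (run L p'.2); rewrite ?mulr1 ?mulr0 // ltW.
by apply: IH => // p'' h; apply: hp; right.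
Qed.

Lemma acc_all (V : finType) (D : seq (rat * dtree V)) L :
  (forall p, InSeq p D -> run L p.2) -> acc_prob D L = \sum_(p <- D) p.1.
Proof.
rewrite /acc_prob; elim: D => [|p D IH] hr; first by rewrite !big_nil.
by rewrite !big_cons (hr p (or_introl erefl)) mulr1 IH // => p' h; apply: hr; right.
Qed.

Lemma all_true (V : finType) (D : seq (rat * dtree V)) L p :
  (forall p, InSeq p D -> 0 < p.1) -> acc_prob D L = \sum_(p <- D) p.1 ->
  InSeq p D -> run L p.2.
Proof.
move=> hp he hin; apply/negPn/negP => /negbTE hr.
have := acc_lt hp hin hr; rewrite he -{2}(addr0 (\sum_(p0 <- D) p0.1)) lerD2l.
by rewrite leNgt hp.
Qed.

Lemma key_tree (V : finType) (X : {set {set V}}) n (gamma : 'I_n -> V) i m t :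
  simple_cycle X gamma -> non_skipping X gamma i -> tree_ok X m t ->
  forall A : {set 'I_n}, (#|A| + m * i < n)%N ->
  exists2 c, c \notin A & run (Lf gamma) t = run (Lc gamma c) t.
Proof.
move=> Hsc Hns; elim=> [q b | q e k He Hk IH] A hA.
  have : (0 < #|~: A|)%N by move: (cardsC A); rewrite card_ord; lia.
  by case/card_gt0P => c; rewrite inE => hc; exists c.
set B := [set c | skips gamma e c].
have hB : (#|B| <= i)%N.
  case: (boolP (e \subset codom gamma)) => hs.
    by apply: Hns => //; apply/subsetP.
  rewrite (_ : B = set0) ?cards0 //; apply/setP => c; rewrite !inE.
  apply/negbTE/negP; rewrite /skips; case/existsP => a /existsP [b /andP [/eqP Ee _]].
  move/negP: hs; apply; rewrite Ee; apply/subsetP => v; rewrite !inE.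
  by case/orP => /eqP ->; apply: codom_f.
have hAB : (#|A :|: B| + q * i < n)%N.
  have [h _] := leq_card_setU A B.
  apply: leq_ltn_trans (leq_add h (leqnn _)) _; apply: leq_ltn_trans hA.
  by rewrite mulSn addnA leq_add2r leq_add2l.
have [c hc E] := IH (answer (Lf gamma) e false) (answer (Lf gamma) e true) _ hAB.
move: hc; rewrite inE negb_or => /andP [hcA hcB].
exists c => //=.
have hg : good gamma c e.
  by apply: (good_ns Hsc He); move: hcB; rewrite inE.
by rewrite E /answer /Lc hg.
Qed.

Theorem mainTheorem9 (V : finType) (X : {set {set V}}) (n : nat)
    (gamma : 'I_n -> V) (i q : nat) (D : seq (rat * dtree V)) :
  is_complex X -> simple_cycle X gamma -> non_skipping X gamma i ->
  is_list_agreement_test X D q ->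
  (n <= q * i)%N.
Proof.
move=> _ Hsc Hns [Hpos Hsum Hok Hacc Hrej].
rewrite leqNgt; apply/negP => hlt.
have E : acc_prob D (Lf gamma) = 1.
  rewrite -Hsum; apply: acc_all => p hp.
  have h0 : (#|(set0 : {set 'I_n})| + q * i < n)%N by rewrite cards0.
  have [c _ ->] := key_tree Hsc Hns (Hok p hp) h0.
  apply: (all_true Hpos) => //.
  by rewrite Hsum; apply: Hacc; apply: Lc_agree; case: Hsc.
have := Hrej _ (Lf_nagree Hsc).
by rewrite E ltxx.
Qed.
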